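(* Let $X,h,\Gamma^\pm,\Phi^t_{\mathcal X_h}$ be as below. Let $\mathcal U^\pm=\tilde{\mathcal U}^\pm\times\mathbb R$ be conical neighborhoods of $\Gamma^\pm$ with $\mathcal U^+$ positively invariant and $\mathcal U^-$ negatively invariant under the flow, $\delta>0$, and $k,\mathtt m\in C^\infty(T^*\mathbb T\setminus\{\xi=0\})$ positively homogeneous of degree one with $k=\pm|\xi|$ on $\Gamma^\pm$, $\{h,k\}\ge\delta|\xi|$ on $\mathcal U^+\cup\mathcal U^-$, $\mathtt m=\{h,k\}$ on $\mathcal U^+\cup\mathcal U^-$ and $\mathtt m\ge\frac\delta2|\xi|$ everywhere. For $z\in B(\Gamma^\pm):=T^*\mathbb T\setminus\Gamma^\mp$ (with $\xi\ne0$) define $$\ell^\pm(z):=\lim_{t\to\pm\infty}\Big[k(\Phi^t_{\mathcal X_h}(z))-\int_0^t\mathtt m(\Phi^s_{\mathcal X_h}(z))\,ds\Big].$$ Then (i) $\ell^\pm$ is well defined on $B(\Gamma^\pm)$, smooth, positively homogeneous of degree one, and $\ell^\pm=k$ on $\Gamma^\pm$; (ii) $\{h,\ell^\pm\}(x,\xi)\ge\frac\delta2|\xi|$ for all $(x,\xi)\in B(\Gamma^\pm)$ with $\xi\neq0$.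
   Context: $\mathbb T:=\mathbb R/2\pi\mathbb Z$; $X\in C^\infty(\mathbb T;\mathbb R)$ has at least one zero and no degenerate zero; $h(x,\xi)=\xi X(x)$ on $T^*\mathbb T\simeq\mathbb T\times\mathbb R$, with Hamiltonian vector field $\mathcal X_h=(X(x),-\xi X'(x))$ and complete flow $\Phi^t_{\mathcal X_h}$. $K^+:=\{X=0,X'<0\}$, $K^-:=\{X=0,X'>0\}$, $\Gamma^\pm=K^\pm\times\mathbb R$. Poisson bracket $\{h,f\}:=\partial_\xi h\partial_xf-\partial_xh\partial_\xi f$. Positive homogeneity of degree $\rho$: $f(x,\lambda\xi)=\lambda^\rho f(x,\xi)$ for $\lambda>0$. *)

(* Defs.v *)
From Stdlib Require Import Reals Lra.
From Coquelicot Require Import Coquelicot.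
Open Scope R_scope.

(* The cotangent bundle T^*T is represented by its lift R x R, with the
   base variable x taken 2*PI-periodically. *)

Definition dx (f : R -> R -> R) (x xi : R) : R := Derive (fun y => f y xi) x.
Definition dxi (f : R -> R -> R) (x xi : R) : R := Derive (fun e => f x e) xi.

Definition cont2_on (U : R -> R -> Prop) (f : R -> R -> R) : Prop :=
  forall x xi, U x xi -> continuous (fun p : R * R => f (fst p) (snd p)) (x, xi).

Fixpoint Cn_on (n : nat) (U : R -> R -> Prop) (f : R -> R -> R) : Prop :=
  match n with
  | O => cont2_on U f
  | S n' => cont2_on U f /\
      (forall x xi, U x xi -> ex_derive (fun y => f y xi) x /\ ex_derive (fun e => f x e) xi) /\
      Cn_on n' U (dx f) /\ Cn_on n' U (dxi f)
  end.

Definition smooth_on (U : R -> R -> Prop) (f : R -> R -> R) : Prop :=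
  forall n, Cn_on n U f.

Definition smooth1 (X : R -> R) : Prop := forall n x, ex_derive_n X n x.

Definition periodic1 (X : R -> R) : Prop := forall x, X (x + 2 * PI) = X x.
Definition periodic2 (f : R -> R -> R) : Prop := forall x xi, f (x + 2 * PI) xi = f x xi.

Definition nonzero_xi (x xi : R) : Prop := xi <> 0.

Definition pos_homog1 (f : R -> R -> R) : Prop :=
  forall x xi lam, 0 < lam -> xi <> 0 -> f x (lam * xi) = lam * f x xi.

(* K^+ (b = true) and K^- (b = false) *)
Definition Kset (X : R -> R) (b : bool) (x : R) : Prop :=
  X x = 0 /\ (if b then Derive X x < 0 else 0 < Derive X x).

Definition sgn (b : bool) : R := if b then 1 else -1.

Definition Bset (X : R -> R) (b : bool) (x xi : R) : Prop :=
  xi <> 0 /\ ~ Kset X (negb b) x.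

(* Poisson bracket {h, f} with h(x,ξ) = ξ X(x) *)
Definition PB (X : R -> R) (f : R -> R -> R) (x xi : R) : R :=
  X x * dx f x xi - xi * Derive X x * dxi f x xi.

Definition limpt (b : bool) : Rbar := if b then p_infty else m_infty.

Definition is_ham_flow (X : R -> R) (Phi : R -> R * R -> R * R) : Prop :=
  (forall z, Phi 0 z = z) /\
  (forall z t,
     is_derive (fun s => fst (Phi s z)) t (X (fst (Phi t z))) /\
     is_derive (fun s => snd (Phi s z)) t (- snd (Phi t z) * Derive X (fst (Phi t z)))).

Definition ell_approx (k m : R -> R -> R) (Phi : R -> R * R -> R * R) (z : R * R) (t : R) : R :=
  k (fst (Phi t z)) (snd (Phi t z)) - RInt (fun s => m (fst (Phi s z)) (snd (Phi s z))) 0 t.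

(* Main.v *)
Require Import Defs.
From Stdlib Require Import Reals Lra Lia FunctionalExtensionality Classical.
From Coquelicot Require Import Coquelicot.
Open Scope R_scope.

Fixpoint Sm (n : nat) (a b : R) (f : R -> R) : Prop :=
  (forall x, a < x < b -> continuous f x) /\
  match n with
  | O => True
  | S n' => (forall x, a < x < b -> ex_derive f x) /\ Sm n' a b (Derive f)
  end.

Lemma Sm_S n a b f : Sm (S n) a b f -> Sm n a b f.
Proof.
  revert f; induction n as [|n IH]; intros f [Hc [Hd Hs]].
  - split; [exact Hc|exact I].
  - split; [exact Hc|]. split; [exact Hd|]. apply IH. exact Hs.
Qed.

Lemma Sm_cont n a b f x : Sm n a b f -> a < x < b -> continuous f x.
Proof. destruct n; intros [H _]; auto. Qed.

Lemma loc_int a b x : a < x < b -> locally x (fun y => a < y < b).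
Proof.
  intros Hx. assert (He : 0 < Rmin (x - a) (b - x)).
  { apply Rmin_pos; lra. }
  exists (mkposreal _ He). intros y Hy. simpl in Hy.
  unfold ball in Hy; simpl in Hy; unfold AbsRing_ball, abs, minus, plus, opp in Hy; simpl in Hy.
  apply Rabs_def2 in Hy. destruct Hy as [H1 H2].
  pose proof (Rmin_l (x-a) (b-x)). pose proof (Rmin_r (x-a) (b-x)). lra.
Qed.

Lemma Sm_ext n a b f g : (forall x, a < x < b -> f x = g x) -> Sm n a b f -> Sm n a b g.
Proof.
  revert f g; induction n as [|n IH]; intros f g Hfg [Hc Hr].
  - split; auto. intros x Hx. apply continuous_ext_loc with f; auto.
    generalize (loc_int a b x Hx). apply filter_imp. intros y Hy. auto.
  - destruct Hr as [Hd Hs]. split; [|split].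
    + intros x Hx. apply continuous_ext_loc with f; auto.
      generalize (loc_int a b x Hx). apply filter_imp. intros y Hy. auto.
    + intros x Hx. apply ex_derive_ext_loc with f; auto.
      generalize (loc_int a b x Hx). apply filter_imp. intros y Hy. auto.
    + apply IH with (Derive f); auto. intros x Hx. apply Derive_ext_loc.
      generalize (loc_int a b x Hx). apply filter_imp. intros y Hy. auto.
Qed.

Lemma Sm_sub n a b a' b' f : a <= a' -> b' <= b -> Sm n a b f -> Sm n a' b' f.
Proof.
  revert f; induction n as [|n IH]; intros f H1 H2 [Hc Hr].
  - split; auto. intros x Hx; apply Hc; lra.
  - destruct Hr as [Hd Hs]. split; [|split].
    + intros x Hx; apply Hc; lra.
    + intros x Hx; apply Hd; lra.
    + apply IH; auto.
Qed.

Lemma Sm_const n a b c : Sm n a b (fun _ => c).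
Proof.
  revert c; induction n as [|n IH]; intros c.
  - split; auto. intros; apply continuous_const.
  - split; [|split].
    + intros; apply continuous_const.
    + intros; apply ex_derive_const.
    + apply Sm_ext with (fun _ => 0); auto. intros x _. rewrite Derive_const. auto.
Qed.

Lemma Sm_plus n a b f g : Sm n a b f -> Sm n a b g -> Sm n a b (fun x => f x + g x).
Proof.
  revert f g; induction n as [|n IH]; intros f g [Hcf Hf] [Hcg Hg].
  - split; auto. intros x Hx. apply (continuous_plus f g); auto.
  - destruct Hf as [Hdf Hsf]; destruct Hg as [Hdg Hsg]. split; [|split].
    + intros x Hx. apply (continuous_plus f g); auto.
    + intros x Hx. apply (ex_derive_plus f g); auto.
    + apply Sm_ext with (fun x => Derive f x + Derive g x); auto.
      intros x Hx. rewrite Derive_plus; auto.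
Qed.

Lemma Sm_opp n a b f : Sm n a b f -> Sm n a b (fun x => - f x).
Proof.
  revert f; induction n as [|n IH]; intros f [Hcf Hf].
  - split; auto. intros x Hx. apply (continuous_opp f); auto.
  - destruct Hf as [Hdf Hsf]. split; [|split].
    + intros x Hx. apply (continuous_opp f); auto.
    + intros x Hx. apply (ex_derive_opp f); auto.
    + apply Sm_ext with (fun x => - Derive f x); auto.
      intros x Hx. rewrite Derive_opp; auto.
Qed.

Lemma Sm_mult n a b f g : Sm n a b f -> Sm n a b g -> Sm n a b (fun x => f x * g x).
Proof.
  revert f g; induction n as [|n IH]; intros f g Hf Hg.
  - destruct Hf as [Hcf _]; destruct Hg as [Hcg _].
    split; auto. intros x Hx. apply (continuous_mult f g); auto.
  - pose proof (Sm_S _ _ _ _ Hf) as Hf'. pose proof (Sm_S _ _ _ _ Hg) as Hg'.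
    destruct Hf as [Hcf [Hdf Hsf]]; destruct Hg as [Hcg [Hdg Hsg]]. split; [|split].
    + intros x Hx. apply (continuous_mult f g); auto.
    + intros x Hx. apply (ex_derive_mult f g); auto.
    + apply Sm_ext with (fun x => Derive f x * g x + f x * Derive g x); auto.
      intros x Hx. rewrite Derive_mult; auto.
      apply Sm_plus; apply IH; auto.
Qed.

Lemma Sm_inv n a b f : (forall x, a < x < b -> f x <> 0) -> Sm n a b f -> Sm n a b (fun x => / f x).
Proof.
  revert f; induction n as [|n IH]; intros f Hnz Hf.
  - destruct Hf as [Hcf _].
    split; auto. intros x Hx. apply continuity_pt_filterlim. apply continuity_pt_inv.
    apply continuity_pt_filterlim. apply Hcf; auto. apply Hnz; auto.
  - pose proof (Sm_S _ _ _ _ Hf) as Hf'.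
    destruct Hf as [Hcf [Hdf Hsf]]. split; [|split].
    + intros x Hx. apply (ex_derive_continuous (fun y => / f y)). apply ex_derive_inv; auto.
    + intros x Hx. apply ex_derive_inv; auto.
    + apply Sm_ext with (fun x => - Derive f x * (/ f x * / f x)); auto.
      intros x Hx. rewrite Derive_inv; auto. field. auto.
      apply Sm_mult. apply Sm_opp. auto. apply Sm_mult; apply IH; auto.
Qed.

Lemma Sm_RInt n a b g y0 : a < y0 < b -> Sm n a b g ->
  Sm (S n) a b (fun x => RInt g x y0).
Proof.
  intros Hy Hg.
  assert (Hd : forall x, a < x < b -> is_derive (fun x => RInt g x y0) x (- g x)).
  { intros x Hx. apply (is_derive_RInt' g (fun x => RInt g x y0) x y0).
    - generalize (loc_int a b x Hx). apply filter_imp. intros u Hu.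
      apply (RInt_correct g). apply (ex_RInt_continuous g). intros z Hz.
      apply (Sm_cont n a b g z Hg).
      pose proof (Rmin_l u y0); pose proof (Rmin_r u y0); pose proof (Rmax_l u y0); pose proof (Rmax_r u y0).
      destruct (Rle_dec u y0).
      + rewrite Rmin_left in Hz by lra; rewrite Rmax_right in Hz by lra; lra.
      + rewrite Rmin_right in Hz by lra; rewrite Rmax_left in Hz by lra; lra.
    - apply (Sm_cont n a b g x Hg Hx). }
  split; [|split].
  - intros x Hx. apply (ex_derive_continuous (fun x => RInt g x y0)). eexists; apply Hd; auto.
  - intros x Hx. eexists; apply Hd; auto.
  - apply Sm_ext with (fun x => - g x). intros x Hx. symmetry. apply is_derive_unique. apply Hd; auto.
    apply Sm_opp; auto.
Qed.

Lemma Sm_of_smooth1 n a b f : (forall j x, ex_derive_n f j x) -> Sm n a b f.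
Proof.
  revert f; induction n as [|n IH]; intros f Hf.
  - split; auto. intros x _. apply (ex_derive_continuous f). apply (Hf 1%nat x).
  - split; [|split].
    + intros x _. apply (ex_derive_continuous f). apply (Hf 1%nat x).
    + intros x _. apply (Hf 1%nat x).
    + apply IH. intros j x. destruct j as [|j]. exact I.
      simpl. apply ex_derive_ext with (Derive_n f (S j)).
      * intros t. change (Derive_n f (S j) t = Derive_n (Derive_n f 1) j t). rewrite (Derive_n_comp f j 1 t). replace (j+1)%nat with (S j) by lia.
        reflexivity.
      * apply (Hf (S (S j)) x).
Qed.

Lemma Sm_of_Cn n a b (m : R -> R -> R) s : s <> 0 -> Cn_on n nonzero_xi m -> Sm n a b (fun x => m x s).
Proof.
  intros Hs. revert m; induction n as [|n IH]; intros m Hm.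
  - split; auto. intros x _.
    apply (continuous_comp_2 (fun x => x) (fun _ => s) (fun u v => m u v)).
    apply continuous_id. apply continuous_const. apply Hm. exact Hs.
  - destruct Hm as [Hc [Hd [Hx Hxi]]]. split; [|split].
    + intros x _. apply (continuous_comp_2 (fun x => x) (fun _ => s) (fun u v => m u v)).
      apply continuous_id. apply continuous_const. apply Hc. exact Hs.
    + intros x _. apply (Hd x s Hs).
    + apply (IH (dx m)). exact Hx.
Qed.

Definition open2 (V : R -> R -> Prop) := forall x xi, V x xi -> locally_2d V x xi.

Lemma Cn_sub n (U V : R -> R -> Prop) f : (forall x xi, U x xi -> V x xi) -> Cn_on n V f -> Cn_on n U f.
Proof.
  intros HUV. revert f; induction n as [|n IH]; intros f Hf.
  - intros x xi H. apply Hf; auto.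
  - destruct Hf as [Hc [Hd [Hx Hxi]]]. split; [|split; [|split]].
    + intros x xi H; apply Hc; auto.
    + intros x xi H; apply Hd; auto.
    + apply IH; auto.
    + apply IH; auto.
Qed.

Lemma Cn_local n (U : R -> R -> Prop) f :
  (forall x xi, U x xi -> exists V : R -> R -> Prop, V x xi /\ Cn_on n V f) -> Cn_on n U f.
Proof.
  revert f; induction n as [|n IH]; intros f Hf.
  - intros x xi H. destruct (Hf x xi H) as [V [HV HC]]. apply HC; auto.
  - split; [|split; [|split]].
    + intros x xi H. destruct (Hf x xi H) as [V [HV HC]]. apply HC; auto.
    + intros x xi H. destruct (Hf x xi H) as [V [HV HC]]. apply HC; auto.
    + apply IH. intros x xi H. destruct (Hf x xi H) as [V [HV HC]]. exists V; split; auto. apply HC.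
    + apply IH. intros x xi H. destruct (Hf x xi H) as [V [HV HC]]. exists V; split; auto. apply HC.
Qed.

Lemma Cn_ext n (V : R -> R -> Prop) f g : open2 V -> (forall x xi, V x xi -> f x xi = g x xi) ->
  Cn_on n V f -> Cn_on n V g.
Proof.
  intros HV. revert f g; induction n as [|n IH]; intros f g Hfg Hf.
  - intros x xi H. apply (continuous_ext_loc (fun p => g (fst p) (snd p)) (fun p => f (fst p) (snd p))); [|apply Hf; auto].
    apply (locally_2d_locally (fun u v => f u v = g u v)).
    apply locally_2d_impl with V; auto. apply locally_2d_forall. intros u v Hu. auto.
  - destruct Hf as [Hc [Hd [Hx Hxi]]]. split; [|split; [|split]].
    + intros x xi H. apply (continuous_ext_loc (fun p => g (fst p) (snd p)) (fun p => f (fst p) (snd p))); [|apply Hc; auto].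
      apply (locally_2d_locally (fun u v => f u v = g u v)).
      apply locally_2d_impl with V; auto. apply locally_2d_forall. intros u v Hu. auto.
    + intros x xi H. destruct (Hd x xi H) as [H1 H2]. split.
      * apply ex_derive_ext_loc with (fun y => f y xi); auto.
        apply (locally_2d_1d_const_y (fun u v => f u v = g u v)).
        apply locally_2d_impl with V; auto. apply locally_2d_forall. intros u v Hu. auto.
      * apply ex_derive_ext_loc with (fun y => f x y); auto.
        apply (locally_2d_1d_const_x (fun u v => f u v = g u v)).
        apply locally_2d_impl with V; auto. apply locally_2d_forall. intros u v Hu. auto.
    + apply IH with (dx f); auto. intros x xi H. unfold dx. apply Derive_ext_loc.
      apply (locally_2d_1d_const_y (fun u v => f u v = g u v)).
      apply locally_2d_impl with V; auto. apply locally_2d_forall. intros u v Hu. auto.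
    + apply IH with (dxi f); auto. intros x xi H. unfold dxi. apply Derive_ext_loc.
      apply (locally_2d_1d_const_x (fun u v => f u v = g u v)).
      apply locally_2d_impl with V; auto. apply locally_2d_forall. intros u v Hu. auto.
Qed.

Lemma Cn_opp n U f : Cn_on n U f -> Cn_on n U (fun x xi => - f x xi).
Proof.
  revert f; induction n as [|n IH]; intros f Hf.
  - intros x xi H. apply (continuous_opp (fun p => f (fst p) (snd p))). apply Hf; auto.
  - destruct Hf as [Hc [Hd [Hx Hxi]]]. split; [|split; [|split]].
    + intros x xi H. apply (continuous_opp (fun p => f (fst p) (snd p))). apply Hc; auto.
    + intros x xi H. destruct (Hd x xi H). split.
      apply (ex_derive_opp (fun y => f y xi)); auto. apply (ex_derive_opp (fun y => f x y)); auto.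
    + replace (dx (fun x xi => - f x xi)) with (fun x xi => - dx f x xi). apply IH; auto.
      apply functional_extensionality; intro x; apply functional_extensionality; intro xi.
      unfold dx. rewrite Derive_opp. auto.
    + replace (dxi (fun x xi => - f x xi)) with (fun x xi => - dxi f x xi). apply IH; auto.
      apply functional_extensionality; intro x; apply functional_extensionality; intro xi.
      unfold dxi. rewrite Derive_opp. auto.
Qed.

Lemma Cn_prod n a b (W : R -> Prop) Q : (forall j, Sm j a b Q) ->
  forall al be, Cn_on n (fun x xi => a < x < b /\ W xi) (fun x xi => (al * xi + be) * Q x).
Proof.
  revert Q; induction n as [|n IH]; intros Q HQ al be.
  - intros x xi [Hx _].
    apply (continuous_comp_2 (fun p : R*R => al * snd p + be) (fun p => Q (fst p)) (fun u v => u * v)).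
    + apply (continuous_plus (fun p : R*R => al * snd p) (fun _ => be)).
      apply (continuous_scal_r al (fun p : R*R => snd p)). apply continuous_snd. apply continuous_const.
    + apply (continuous_comp fst Q). apply continuous_fst. apply (Sm_cont 0 a b Q x (HQ 0%nat) Hx).
    + apply (continuous_mult (fun p : R*R => fst p) (fun p : R*R => snd p)).
      apply continuous_fst. apply continuous_snd.
  - split; [|split; [|split]].
    + intros x xi [Hx _].
    apply (continuous_comp_2 (fun p : R*R => al * snd p + be) (fun p => Q (fst p)) (fun u v => u * v)).
    * apply (continuous_plus (fun p : R*R => al * snd p) (fun _ => be)).
      apply (continuous_scal_r al (fun p : R*R => snd p)). apply continuous_snd. apply continuous_const.
    * apply (continuous_comp fst Q). apply continuous_fst. apply (Sm_cont 0 a b Q x (HQ 0%nat) Hx).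
    * apply (continuous_mult (fun p : R*R => fst p) (fun p : R*R => snd p)).
      apply continuous_fst. apply continuous_snd.
    + intros x xi [Hx _]. split.
      * apply ex_derive_scal. destruct (HQ 1%nat) as [_ [Hd _]]. apply Hd; auto.
      * apply ex_derive_mult. auto_derive. auto. apply ex_derive_const.
    + replace (dx (fun x xi => (al * xi + be) * Q x)) with (fun x xi => (al * xi + be) * Derive Q x).
      apply IH. intros j. destruct (HQ (S j)) as [_ [_ H]]. exact H.
      apply functional_extensionality; intro x; apply functional_extensionality; intro xi.
      unfold dx. rewrite Derive_scal. auto.
    + replace (dxi (fun x xi => (al * xi + be) * Q x)) with (fun x xi => (0 * xi + al) * Q x).
      apply IH. auto.
      apply functional_extensionality; intro x; apply functional_extensionality; intro xi.
      unfold dxi. symmetry. apply is_derive_unique. auto_derive. auto. ring.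
Qed.

Lemma dmult (f g : R -> R) x df dg : is_derive f x df -> is_derive g x dg ->
  is_derive (fun t => f t * g t) x (df * g x + f x * dg).
Proof. intros H1 H2. apply (is_derive_mult f g x df dg H1 H2). intros; apply Rmult_comm. Qed.

Lemma dplus (f g : R -> R) x df dg : is_derive f x df -> is_derive g x dg ->
  is_derive (fun t => f t + g t) x (df + dg).
Proof. intros H1 H2. apply (is_derive_plus f g x df dg H1 H2). Qed.

Lemma dminus (f g : R -> R) x df dg : is_derive f x df -> is_derive g x dg ->
  is_derive (fun t => f t - g t) x (df - dg).
Proof. intros H1 H2. apply (is_derive_minus f g x df dg H1 H2). Qed.

Lemma dcomp (f g : R -> R) x df dg : is_derive f (g x) df -> is_derive g x dg ->
  is_derive (fun t => f (g t)) x (dg * df).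
Proof. intros H1 H2. apply (is_derive_comp f g x df dg H1 H2). Qed.

Lemma dconst (c x : R) : is_derive (fun _ => c) x 0.
Proof. apply (is_derive_const c x). Qed.

Lemma dval (f : R -> R) x d d' : is_derive f x d -> d = d' -> is_derive f x d'.
Proof. intros H ->; auto. Qed.

Lemma der_cont (f : R -> R) x d : is_derive f x d -> continuity_pt f x.
Proof. intros H. apply continuity_pt_filterlim. apply (ex_derive_continuous f). exists d; auto. Qed.

Lemma der_cont' (f : R -> R) x d : is_derive f x d -> continuous f x.
Proof. intros H. apply (ex_derive_continuous f). exists d; auto. Qed.

Lemma const_from (f : R -> R) T : (forall t, T <= t -> is_derive f t 0) -> forall t, T <= t -> f t = f T.
Proof.
  intros Hd t Ht. destruct (MVT_gen f T t (fun _ => 0)) as [c [Hc Heq]].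
  - intros x Hx. apply Hd. rewrite Rmin_left in Hx by lra. lra.
  - intros x Hx. apply der_cont with 0. apply Hd. rewrite Rmin_left in Hx by lra. lra.
  - lra.
Qed.

Lemma const_all (f : R -> R) : (forall t, is_derive f t 0) -> forall t, f t = f 0.
Proof.
  intros Hd t. destruct (MVT_gen f 0 t (fun _ => 0)) as [c [Hc Heq]].
  - intros x Hx. apply Hd.
  - intros x Hx. apply der_cont with 0. apply Hd.
  - lra.
Qed.

Lemma lim_from (f : R -> R) T : (forall t, T <= t -> is_derive f t 0) -> is_lim f p_infty (f T).
Proof.
  intros Hd. apply is_lim_ext_loc with (fun _ => f T).
  - exists T. intros x Hx. symmetry. apply const_from; auto. lra.
  - apply is_lim_const.
Qed.

Definition sg (x : R) : R := if Rle_dec 0 x then 1 else -1.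

Lemma sg_abs x : Rabs x = sg x * x.
Proof. unfold sg. destruct (Rle_dec 0 x). rewrite Rabs_right; lra. rewrite Rabs_left; lra. Qed.

Lemma sg_nz x : sg x <> 0.
Proof. unfold sg; destruct (Rle_dec 0 x); lra. Qed.

Lemma sg_same x y : x * y > 0 -> sg x = sg y.
Proof.
  intros H. unfold sg. destruct (Rle_dec 0 x), (Rle_dec 0 y); auto.
  - exfalso. assert (x = 0 \/ 0 < x) as [->|Hx] by lra. lra. nra.
  - exfalso. assert (y = 0 \/ 0 < y) as [->|Hy] by lra. lra. nra.
Qed.

Lemma homog_sg f x xi : pos_homog1 f -> xi <> 0 -> f x xi = Rabs xi * f x (sg xi).
Proof.
  intros Hf Hxi. rewrite <- Hf. f_equal. rewrite sg_abs. unfold sg; destruct (Rle_dec 0 xi); lra.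
  apply Rabs_pos_lt; auto. apply sg_nz.
Qed.

Lemma homog_sg' f x xi : pos_homog1 f -> xi <> 0 -> f x xi = sg xi * xi * f x (sg xi).
Proof. intros. rewrite <- sg_abs. apply homog_sg; auto. Qed.

Lemma smooth1_der X x : smooth1 X -> is_derive X x (Derive X x).
Proof. intros H. apply Derive_correct. apply (H 1%nat x). Qed.

Lemma smooth1_der2 X x : smooth1 X -> is_derive (Derive X) x (Derive (Derive X) x).
Proof. intros H. apply Derive_correct. apply (H 2%nat x). Qed.

Lemma flow_x X Phi z t : is_ham_flow X Phi -> is_derive (fun s => fst (Phi s z)) t (X (fst (Phi t z))).
Proof. intros [_ H]. apply H. Qed.

Lemma flow_p X Phi z t : is_ham_flow X Phi ->
  is_derive (fun s => snd (Phi s z)) t (- snd (Phi t z) * Derive X (fst (Phi t z))).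
Proof. intros [_ H]. apply H. Qed.

Lemma flow_cons X Phi z t : smooth1 X -> is_ham_flow X Phi ->
  snd (Phi t z) * X (fst (Phi t z)) = snd z * X (fst z).
Proof.
  intros HX HP.
  assert (H0 : Phi 0 z = z) by (destruct HP as [H _]; apply H).
  pose proof (const_all (fun s => snd (Phi s z) * X (fst (Phi s z)))) as Hc.
  rewrite Hc. rewrite H0. auto.
  intros s. eapply dval. apply dmult. apply (flow_p X); auto.
  apply (dcomp X (fun s => fst (Phi s z))). apply smooth1_der; auto. apply (flow_x X); auto.
  simpl; ring.
Qed.

Lemma DX_cont X x : smooth1 X -> continuous (Derive X) x.
Proof. intros H. apply der_cont' with (Derive (Derive X) x). apply smooth1_der2; auto. Qed.

Lemma X_cont X x : smooth1 X -> continuous X x.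
Proof. intros H. apply der_cont' with (Derive X x). apply smooth1_der; auto. Qed.

Lemma flow_x_cont X Phi z t : is_ham_flow X Phi -> continuous (fun s => fst (Phi s z)) t.
Proof. intros H. apply der_cont' with (X (fst (Phi t z))). apply (flow_x X); auto. Qed.

Lemma flow_p_cont X Phi z t : is_ham_flow X Phi -> continuous (fun s => snd (Phi s z)) t.
Proof. intros H. eapply der_cont'. apply (flow_p X); auto. Qed.

Lemma cont_RInt_der (g : R -> R) t : (forall s, continuous g s) -> is_derive (fun s => RInt g 0 s) t (g t).
Proof.
  intros Hg. apply (is_derive_RInt g (fun s => RInt g 0 s) 0 t).
  - apply filter_forall. intros u. apply (RInt_correct g). apply (ex_RInt_continuous g). intros; auto.
  - auto.
Qed.

Lemma flow_p_sign X Phi z t : smooth1 X -> is_ham_flow X Phi -> snd z <> 0 ->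
  snd (Phi t z) * snd z > 0.
Proof.
  intros HX HP Hz.
  assert (H0 : Phi 0 z = z) by (destruct HP as [H _]; apply H).
  set (g := fun s => Derive X (fst (Phi s z))).
  assert (Hg : forall s, continuous g s).
  { intros s. unfold g. apply (continuous_comp (fun s => fst (Phi s z)) (Derive X)).
    apply (flow_x_cont X); auto. apply DX_cont; auto. }
  pose proof (const_all (fun s => snd (Phi s z) * exp (RInt g 0 s))) as Hc.
  assert (Hw : snd (Phi t z) * exp (RInt g 0 t) = snd z).
  { rewrite Hc. rewrite H0. rewrite RInt_point. simpl. unfold zero; simpl. rewrite exp_0. ring.
    intros s. eapply dval. apply dmult. apply (flow_p X); auto.
    apply (dcomp exp (fun s => RInt g 0 s)). apply is_derive_exp. apply cont_RInt_der; auto.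
    unfold g. simpl; ring. }
  pose proof (exp_pos (RInt g 0 t)).
  assert (snd (Phi t z) = snd z / exp (RInt g 0 t)) as ->.
  { rewrite <- Hw. field. lra. }
  unfold Rdiv. rewrite Rmult_comm, <- Rmult_assoc.
  apply Rmult_lt_0_compat. assert (0 < snd z * snd z). { apply Rsqr_pos_lt in Hz. unfold Rsqr in Hz. lra. } lra.
  apply Rinv_0_lt_compat; auto.
Qed.

Lemma cont_eps (F : R -> R) c : continuous F c ->
  forall eps, 0 < eps -> exists alp, 0 < alp /\ forall u, Rabs (u - c) < alp -> Rabs (F u - F c) < eps.
Proof.
  intros HF eps He. apply continuity_pt_filterlim in HF.
  destruct (HF eps He) as [alp [Ha H]]. exists alp; split; auto.
  intros u Hu. destruct (Req_dec u c) as [->|Hne].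
  - rewrite Rminus_diag, Rabs_R0; auto.
  - apply (H u). split. split. exact I. auto. exact Hu.
Qed.

Lemma zeros_above X : periodic1 X -> (exists x, X x = 0) -> forall y, exists z, y < z /\ X z = 0.
Proof.
  intros HP [x0 H0] y.
  assert (Hn : forall n, X (x0 + INR n * (2 * PI)) = 0).
  { induction n as [|n IH]. simpl. rewrite Rmult_0_l, Rplus_0_r; auto.
    rewrite S_INR. replace (x0 + (INR n + 1) * (2 * PI)) with ((x0 + INR n * (2 * PI)) + 2 * PI) by ring.
    rewrite HP; auto. }
  destruct (INR_archimed (2 * PI) (y - x0)) as [n Hn']. pose proof PI_RGT_0; lra.
  exists (x0 + INR n * (2 * PI)). split; auto. lra.
Qed.

Lemma zeros_below X : periodic1 X -> (exists x, X x = 0) -> forall y, exists z, z < y /\ X z = 0.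
Proof.
  intros HP [x0 H0] y.
  assert (Hn : forall n, X (x0 - INR n * (2 * PI)) = 0).
  { induction n as [|n IH]. simpl. rewrite Rmult_0_l, Rminus_0_r; auto.
    rewrite <- IH. rewrite S_INR. replace (x0 - INR n * (2 * PI)) with ((x0 - (INR n + 1) * (2 * PI)) + 2 * PI) by ring.
    rewrite HP; auto. }
  destruct (INR_archimed (2 * PI) (x0 - y)) as [n Hn']. pose proof PI_RGT_0; lra.
  exists (x0 - INR n * (2 * PI)). split; auto. lra.
Qed.

Lemma dsign_left (X : R -> R) c d a : is_derive X c d -> X c = 0 -> a < c ->
  (forall u, a < u < c -> 0 < X u) -> d <= 0.
Proof.
  intros Hd H0 Ha Hp. apply is_derive_Reals in Hd.
  destruct (Rle_dec d 0) as [|Hn]; auto. exfalso.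
  destruct (Hd (d/2)) as [del Hdel]. lra.
  set (h := - Rmin del (c - a) / 2).
  assert (Hm : 0 < Rmin del (c - a)) by (apply Rmin_pos; [apply cond_pos|lra]).
  pose proof (Rmin_l del (c - a)). pose proof (Rmin_r del (c - a)).
  assert (Hh : h <> 0) by (unfold h; lra).
  assert (Hh2 : Rabs h < del) by (unfold h; rewrite Rabs_left; lra).
  specialize (Hdel h Hh Hh2). rewrite H0 in Hdel.
  assert (Hx : 0 < X (c + h)) by (apply Hp; unfold h; lra).
  apply Rabs_def2 in Hdel. destruct Hdel as [_ H2].
  assert (Hq : (X (c + h) - 0) / h < 0).
  { unfold Rdiv. rewrite Rminus_0_r. apply Rmult_pos_neg; auto. apply Rinv_lt_0_compat. unfold h; lra. }
  lra.
Qed.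

Lemma dsign_right (X : R -> R) c d b : is_derive X c d -> X c = 0 -> c < b ->
  (forall u, c < u < b -> X u < 0) -> d <= 0.
Proof.
  intros Hd H0 Ha Hp. apply is_derive_Reals in Hd.
  destruct (Rle_dec d 0) as [|Hn]; auto. exfalso.
  destruct (Hd (d/2)) as [del Hdel]. lra.
  set (h := Rmin del (b - c) / 2).
  assert (Hm : 0 < Rmin del (b - c)) by (apply Rmin_pos; [apply cond_pos|lra]).
  pose proof (Rmin_l del (b - c)). pose proof (Rmin_r del (b - c)).
  assert (Hh : h <> 0) by (unfold h; lra).
  assert (Hh2 : Rabs h < del) by (unfold h; rewrite Rabs_right; lra).
  specialize (Hdel h Hh Hh2). rewrite H0 in Hdel.
  assert (Hx : X (c + h) < 0) by (apply Hp; unfold h; lra).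
  apply Rabs_def2 in Hdel. destruct Hdel as [_ H2].
  assert (Hq : (X (c + h) - 0) / h < 0).
  { unfold Rdiv. rewrite Rminus_0_r. apply Rmult_neg_pos; auto. apply Rinv_0_lt_compat. unfold h; lra. }
  lra.
Qed.

Lemma dyn_incr (F f : R -> R) :
  (forall u, continuous F u) -> (forall t, is_derive f t (F (f t))) -> (forall t, 0 < F (f t)) ->
  (exists z1, f 0 < z1 /\ F z1 = 0) ->
  exists c, f 0 < c /\ F c = 0 /\ (forall t, f t < c) /\ (forall u, f 0 <= u < c -> 0 < F u) /\
    (forall u, f 0 <= u < c -> exists T, 0 <= T /\ f T = u) /\ (forall s t, s <= t -> f s <= f t).
Proof.
  intros HF Hd Hpos [z1 [Hz1 HFz1]].
  assert (Hmono : forall s t, s < t -> f s < f t).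
  { intros s t Hst. destruct (MVT_gen f s t (fun t => F (f t))) as [c [Hc Heq]].
    - intros; apply Hd.
    - intros; eapply der_cont; apply Hd.
    - specialize (Hpos c). nra. }
  assert (Hcf : forall x, continuity_pt f x) by (intros; eapply der_cont; apply Hd).
  assert (Hbd : forall t, 0 <= t -> f t < z1).
  { intros t Ht. destruct (Rlt_le_dec (f t) z1) as [|Hge]; auto. exfalso.
    destruct (IVT_gen f 0 t z1) as [s [_ Hs]]. exact Hcf.
    split. rewrite Rmin_left; lra. rewrite Rmax_right; lra.
    specialize (Hpos s). rewrite Hs in Hpos. lra. }
  set (E := fun y => exists t, 0 <= t /\ y = f t).
  destruct (completeness E) as [c [Hub Hlub]].
  { exists z1. intros y [t [Ht ->]]. left; apply Hbd; auto. }
  { exists (f 0). exists 0. split; [lra|auto]. }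
  assert (Hle : forall t, 0 <= t -> f t <= c) by (intros t Ht; apply Hub; exists t; auto).
  assert (Hlt : forall t, f t < c).
  { intros t. apply Rlt_le_trans with (f (Rmax t 0 + 1)). apply Hmono.
    pose proof (Rmax_l t 0); lra. apply Hle. pose proof (Rmax_r t 0); lra. }
  assert (Hex : forall u, u < c -> exists t, 0 <= t /\ u < f t).
  { intros u Hu. apply NNPP. intros Hn. assert (c <= u); [|lra]. apply Hlub.
    intros y [t [Ht ->]]. destruct (Rle_dec (f t) u) as [|Hn']; auto. exfalso. apply Hn. exists t. split; auto. lra. }
  assert (Hreach : forall u, f 0 <= u < c -> exists T, 0 <= T /\ f T = u).
  { intros u Hu. destruct (Hex u) as [t [Ht Hft]]. lra.
    destruct (IVT_gen f 0 t u) as [T [HT HfT]]. exact Hcf.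
    split. rewrite Rmin_left; lra. rewrite Rmax_right; lra.
    exists T. rewrite Rmin_left in HT by lra. split; [lra|auto]. }
  assert (Hposu : forall u, f 0 <= u < c -> 0 < F u).
  { intros u Hu. destruct (Hreach u Hu) as [T [_ <-]]. auto. }
  assert (Hf0 : f 0 < c) by apply Hlt.
  exists c. split; auto. split; [|split; [|split; [|split]]]; auto.
  - destruct (Rtotal_order (F c) 0) as [Hn|[Hz|Hp]]; auto; exfalso.
    + destruct (cont_eps F c (HF c) (- F c)) as [alp [Ha Hal]]. lra.
      set (u := Rmax (f 0) (c - alp / 2)).
      pose proof (Rmax_l (f 0) (c - alp/2)). pose proof (Rmax_lub (f 0) (c - alp/2) c).
      assert (Hu : f 0 <= u < c). { unfold u; split; auto. apply Rmax_lub_lt; lra. }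
      specialize (Hposu u Hu).
      assert (Rabs (u - c) < alp). { rewrite Rabs_left by lra. pose proof (Rmax_r (f 0) (c - alp/2)). unfold u in *. lra. }
      specialize (Hal u H1). apply Rabs_def2 in Hal. lra.
    + destruct (cont_eps F c (HF c) (F c / 2)) as [alp [Ha Hal]]. lra.
      destruct (Hex (c - alp)) as [t0 [Ht0 Hft0]]. lra.
      set (t1 := t0 + 2 * alp / F c).
      assert (Hq : 0 < 2 * alp / F c) by (apply Rdiv_lt_0_compat; lra).
      destruct (MVT_gen f t0 t1 (fun t => F (f t))) as [xi [Hxi Heq]].
      * intros; apply Hd.
      * intros; eapply der_cont; apply Hd.
      * rewrite Rmin_left in Hxi by (unfold t1; lra). rewrite Rmax_right in Hxi by (unfold t1; lra).
        assert (Hfx : f t0 <= f xi). { destruct (Req_dec t0 xi) as [->|Hne]. lra. left; apply Hmono; lra. }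
        assert (Rabs (f xi - c) < alp). { specialize (Hlt xi). rewrite Rabs_left by lra. lra. }
        specialize (Hal _ H). apply Rabs_def2 in Hal.
        specialize (Hlt t1).
        assert (f t1 - f t0 > F c / 2 * (t1 - t0)).
        { rewrite Heq. apply Rmult_gt_compat_r. unfold t1; lra. lra. }
        unfold t1 in *. replace (F c / 2 * (t0 + 2 * alp / F c - t0)) with alp in H0 by (field; lra).
        lra.
  - intros s t Hst. destruct (Req_dec s t) as [->|Hne]. lra. left; apply Hmono; lra.
Qed.

Lemma loc_sign p : p <> 0 -> locally p (fun e => e * p > 0).
Proof.
  intros Hp. assert (H : 0 < Rabs p) by (apply Rabs_pos_lt; auto).
  exists (mkposreal _ H). intros e He. simpl in He.
  unfold ball in He; simpl in He; unfold AbsRing_ball, abs, minus, plus, opp in He; simpl in He.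
  apply Rabs_def2 in He. destruct (Rle_dec 0 p).
  - rewrite Rabs_right in He by lra. nra.
  - rewrite Rabs_left in He by lra. nra.
Qed.

Lemma ex_derive_slice (f : R -> R -> R) s y : s <> 0 -> Cn_on 1 nonzero_xi f -> ex_derive (fun x => f x s) y.
Proof.
  intros Hs Hf. destruct (Sm_of_Cn 1 (y - 1) (y + 1) f s Hs Hf) as [_ [Hd _]]. apply Hd. lra.
Qed.

Lemma cont_slice (f : R -> R -> R) s y : s <> 0 -> Cn_on 0 nonzero_xi f -> continuous (fun x => f x s) y.
Proof.
  intros Hs Hf. destruct (Sm_of_Cn 0 (y - 1) (y + 1) f s Hs Hf) as [Hc _]. apply Hc. lra.
Qed.

Lemma dx_homog f x xi : pos_homog1 f -> xi <> 0 ->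
  dx f x xi = sg xi * xi * Derive (fun y => f y (sg xi)) x.
Proof.
  intros Hf Hxi. unfold dx. rewrite <- Derive_scal. apply Derive_ext. intros y. apply homog_sg'; auto.
Qed.

Lemma dxi_homog f x xi : pos_homog1 f -> xi <> 0 -> dxi f x xi = sg xi * f x (sg xi).
Proof.
  intros Hf Hxi. unfold dxi. apply is_derive_unique.
  apply is_derive_ext_loc with (fun e => sg xi * e * f x (sg xi)).
  - generalize (loc_sign xi Hxi). apply filter_imp. intros e He.
    rewrite (homog_sg' f x e Hf). rewrite (sg_same e xi He). auto. intros ->; lra.
  - eapply dval. apply dmult. apply (is_derive_scal (fun e => e)). apply (is_derive_id).
    apply dconst. simpl. unfold one; simpl. ring.
Qed.

Lemma PB_homog X f x xi : pos_homog1 f -> xi <> 0 ->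
  PB X f x xi = sg xi * xi * (X x * Derive (fun y => f y (sg xi)) x - Derive X x * f x (sg xi)).
Proof.
  intros Hf Hxi. unfold PB. rewrite dx_homog, dxi_homog; auto. ring.
Qed.

Lemma flow_sg X Phi z t : smooth1 X -> is_ham_flow X Phi -> snd z <> 0 -> sg (snd (Phi t z)) = sg (snd z).
Proof. intros. apply sg_same. apply (flow_p_sign X); auto. Qed.

Lemma flow_p_nz X Phi z t : smooth1 X -> is_ham_flow X Phi -> snd z <> 0 -> snd (Phi t z) <> 0.
Proof. intros H1 H2 H3 H4. pose proof (flow_p_sign X Phi z t H1 H2 H3). rewrite H4 in H. lra. Qed.

Lemma F_cont X Phi m z : smooth1 X -> is_ham_flow X Phi -> snd z <> 0 ->
  smooth_on nonzero_xi m -> pos_homog1 m ->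
  forall s, continuous (fun s => m (fst (Phi s z)) (snd (Phi s z))) s.
Proof.
  intros HX HP Hz Hms Hmh s.
  apply (continuous_ext (fun s => sg (snd z) * snd (Phi s z) * m (fst (Phi s z)) (sg (snd z)))).
  - intros u. assert (Hn := flow_p_nz X Phi z u HX HP Hz).
    rewrite (homog_sg' m _ _ Hmh Hn). rewrite (flow_sg X Phi z u HX HP Hz). reflexivity.
  - apply (continuous_mult (fun s => sg (snd z) * snd (Phi s z)) (fun s => m (fst (Phi s z)) (sg (snd z)))).
    + apply (continuous_scal_r (sg (snd z)) (fun s => snd (Phi s z))). apply (flow_p_cont X); auto.
    + apply (continuous_comp (fun s => fst (Phi s z)) (fun y => m y (sg (snd z)))).
      apply (flow_x_cont X); auto. apply cont_slice. apply sg_nz. apply Hms.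
Qed.

Lemma approx_deriv X Phi k m z t : smooth1 X -> is_ham_flow X Phi ->
  smooth_on nonzero_xi k -> pos_homog1 k -> smooth_on nonzero_xi m -> pos_homog1 m ->
  snd z <> 0 ->
  m (fst (Phi t z)) (snd (Phi t z)) = PB X k (fst (Phi t z)) (snd (Phi t z)) ->
  is_derive (ell_approx k m Phi z) t 0.
Proof.
  intros HX HP Hks Hkh Hms Hmh Hz Hpb.
  set (s := sg (snd z)).
  assert (Hsg : forall u, sg (snd (Phi u z)) = s) by (intros; apply (flow_sg X); auto).
  assert (Hnz : forall u, snd (Phi u z) <> 0) by (intros; apply (flow_p_nz X); auto).
  unfold ell_approx.
  apply is_derive_ext with (fun t => s * snd (Phi t z) * k (fst (Phi t z)) s -
     RInt (fun u => m (fst (Phi u z)) (snd (Phi u z))) 0 t).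
  { intros u. f_equal. rewrite (homog_sg' k _ _ Hkh (Hnz u)). rewrite Hsg; auto. }
  eapply dval. apply dminus. apply dmult. apply (is_derive_scal (fun t => snd (Phi t z))).
  apply (flow_p X); auto.
  apply (dcomp (fun y => k y s) (fun t => fst (Phi t z))). apply Derive_correct.
  apply ex_derive_slice. apply sg_nz. apply Hks. apply (flow_x X); auto.
  apply cont_RInt_der. apply (F_cont X); auto.
  rewrite Hpb. rewrite PB_homog; auto. rewrite Hsg. simpl. ring.
Qed.

Lemma lim_Utp X Phi k m (Utp : R -> Prop) x0 xi0 : smooth1 X -> is_ham_flow X Phi ->
  smooth_on nonzero_xi k -> pos_homog1 k -> smooth_on nonzero_xi m -> pos_homog1 m ->
  (forall t x xi, 0 <= t -> Utp x -> Utp (fst (Phi t (x, xi)))) ->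
  (forall x xi, xi <> 0 -> Utp x -> m x xi = PB X k x xi) ->
  xi0 <> 0 -> Utp x0 -> is_lim (ell_approx k m Phi (x0, xi0)) p_infty (k x0 xi0).
Proof.
  intros HX HP Hks Hkh Hms Hmh Hinv HmU Hxi Hx.
  assert (H0 : ell_approx k m Phi (x0, xi0) 0 = k x0 xi0).
  { unfold ell_approx. destruct HP as [HP0 _]. rewrite HP0. rewrite RInt_point. simpl. unfold zero; simpl. ring. }
  rewrite <- H0. apply lim_from. intros t Ht. apply (approx_deriv X); auto.
  apply HmU. apply (flow_p_nz X); auto. apply Hinv; auto.
Qed.

Lemma RInt_lower_der (g : R -> R) a b v y0 : a < v < b -> a < y0 < b ->
  (forall u, a < u < b -> continuous g u) -> is_derive (fun v => RInt g v y0) v (- g v).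
Proof.
  intros Hv Hy Hg. apply (is_derive_RInt' g (fun x => RInt g x y0) v y0).
  - generalize (loc_int a b v Hv). apply filter_imp. intros u Hu.
    apply (RInt_correct g). apply (ex_RInt_continuous g). intros z Hz. apply Hg.
    destruct (Rle_dec u y0).
    + rewrite Rmin_left in Hz by lra; rewrite Rmax_right in Hz by lra; lra.
    + rewrite Rmin_right in Hz by lra; rewrite Rmax_left in Hz by lra; lra.
  - apply Hg; auto.
Qed.

Definition Qf (X : R -> R) (k m : R -> R -> R) (s y0 x : R) : R :=
  X x * (k y0 s / X y0 - RInt (fun u => m u s / (X u * X u)) x y0).

Lemma g_Sm X m s a b n : smooth1 X -> smooth_on nonzero_xi m -> s <> 0 ->
  (forall u, a < u < b -> X u <> 0) -> Sm n a b (fun u => m u s / (X u * X u)).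
Proof.
  intros HX Hms Hs HXnz.
  apply Sm_mult. apply Sm_of_Cn; auto. apply Sm_inv.
  intros u Hu. apply Rmult_integral_contrapositive; split; auto.
  apply Sm_mult; apply Sm_of_smooth1; auto.
Qed.

Lemma lim_formula X Phi k m (Utp : R -> Prop) x0 xi0 a b y0 T :
  smooth1 X -> is_ham_flow X Phi ->
  smooth_on nonzero_xi k -> pos_homog1 k -> smooth_on nonzero_xi m -> pos_homog1 m ->
  (forall x xi, xi <> 0 -> Utp x -> m x xi = PB X k x xi) ->
  xi0 <> 0 -> (forall u, a < u < b -> X u <> 0) -> a < y0 < b ->
  (forall t, 0 <= t -> a < fst (Phi t (x0, xi0)) < b) ->
  0 <= T -> fst (Phi T (x0, xi0)) = y0 -> (forall t, T <= t -> Utp (fst (Phi t (x0, xi0)))) ->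
  is_lim (ell_approx k m Phi (x0, xi0)) p_infty (Rabs xi0 * Qf X k m (sg xi0) y0 x0).
Proof.
  intros HX HP Hks Hkh Hms Hmh HmU Hxi HXnz Hy Htraj HT HxT HU.
  set (z := (x0, xi0)).
  change (fst (Phi T z) = y0) in HxT.
  change (forall t, 0 <= t -> a < fst (Phi t z) < b) in Htraj.
  change (forall t, T <= t -> Utp (fst (Phi t z))) in HU.
  set (s := sg xi0).
  set (g := fun u => m u s / (X u * X u)).
  set (F := fun u => m (fst (Phi u z)) (snd (Phi u z))).
  assert (Hz : snd z <> 0) by (simpl; auto).
  assert (Hsg : forall u, sg (snd (Phi u z)) = s) by (intros; apply (flow_sg X); auto).
  assert (Hnz : forall u, snd (Phi u z) <> 0) by (intros; apply (flow_p_nz X); auto).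
  assert (Hg : forall u, a < u < b -> continuous g u).
  { intros u Hu. apply (Sm_cont 0 a b g); auto. apply g_Sm; auto. apply sg_nz. }
  assert (HF : forall u, F u = s * snd (Phi u z) * m (fst (Phi u z)) s).
  { intros u. unfold F. rewrite (homog_sg' m _ _ Hmh (Hnz u)). rewrite Hsg; auto. }
  set (E := fun t => s * (xi0 * X x0) * (k y0 s / X y0 - RInt g (fst (Phi t z)) y0) - RInt F 0 t).
  assert (HE : forall t, 0 <= t -> is_derive E t 0).
  { intros t Ht. unfold E. specialize (Htraj t Ht).
    eapply dval. apply dminus.
    apply (is_derive_scal (fun t => k y0 s / X y0 - RInt g (fst (Phi t z)) y0)).
    apply dminus. apply dconst.
    apply (dcomp (fun v => RInt g v y0) (fun t => fst (Phi t z))).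
    apply (RInt_lower_der g a b); auto. apply (flow_x X); auto.
    apply cont_RInt_der. apply (F_cont X); auto.
    rewrite HF. 
    assert (Hc := flow_cons X Phi z t HX HP). simpl in Hc.
    rewrite <- Hc. unfold g. assert (X (fst (Phi t z)) <> 0) by (apply HXnz; auto).
    simpl; field; auto. }
  assert (HE0 : E 0 = Rabs xi0 * Qf X k m s y0 x0).
  { unfold E, Qf. destruct HP as [HP0 _]. rewrite HP0. rewrite RInt_point. simpl. unfold zero; simpl.
    rewrite sg_abs. fold s. fold g. ring. }
  assert (HET : ell_approx k m Phi z T = E T).
  { unfold ell_approx, E. rewrite HxT. rewrite RInt_point. unfold zero; simpl.
    assert (Hc := flow_cons X Phi z T HX HP). simpl in Hc. rewrite HxT in Hc.
    rewrite (homog_sg' k _ _ Hkh (Hnz T)). rewrite Hsg. fold F. rewrite <- Hc.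
    assert (X y0 <> 0) by (apply HXnz; auto). simpl; field; auto. }
  rewrite <- HE0. rewrite <- (const_from E 0 HE T HT). rewrite <- HET.
  apply lim_from. intros t Ht. apply (approx_deriv X); auto.
Qed.

Lemma open_ball (U : R -> Prop) c : open U -> U c -> exists r, 0 < r /\ forall u, Rabs (u - c) < r -> U u.
Proof.
  intros HU Hc. destruct (HU c Hc) as [e He]. exists e. split. apply cond_pos.
  intros u Hu. apply He. unfold ball; simpl; unfold AbsRing_ball, abs, minus, plus, opp; simpl. exact Hu.
Qed.

Lemma Xt_cont X Phi z : smooth1 X -> is_ham_flow X Phi -> forall t, continuity_pt (fun s => X (fst (Phi s z))) t.
Proof.
  intros HX HP t. apply continuity_pt_filterlim.
  apply (continuous_comp (fun s => fst (Phi s z)) X). apply (flow_x_cont X); auto. apply X_cont; auto.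
Qed.

Lemma traj_nz X Phi z : smooth1 X -> is_ham_flow X Phi -> snd z <> 0 -> X (fst z) <> 0 ->
  forall t, X (fst (Phi t z)) <> 0.
Proof.
  intros HX HP Hz Hx t H. pose proof (flow_cons X Phi z t HX HP). rewrite H in H0.
  rewrite Rmult_0_r in H0. symmetry in H0. apply Rmult_integral in H0. tauto.
Qed.

Lemma traj_pos X Phi z : smooth1 X -> is_ham_flow X Phi -> snd z <> 0 -> 0 < X (fst z) ->
  forall t, 0 < X (fst (Phi t z)).
Proof.
  intros HX HP Hz Hx t. destruct (Rlt_le_dec 0 (X (fst (Phi t z)))) as [|Hle]; auto. exfalso.
  assert (H0 : Phi 0 z = z) by (destruct HP as [H _]; apply H).
  destruct (IVT_gen (fun s => X (fst (Phi s z))) 0 t 0) as [s [_ Hs]].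
  - intros u; apply Xt_cont; auto.
  - cbv beta. rewrite H0. rewrite Rmin_right by lra. rewrite Rmax_left by lra. lra.
  - apply (traj_nz X Phi z HX HP Hz) with s; auto. lra.
Qed.

Lemma traj_neg X Phi z : smooth1 X -> is_ham_flow X Phi -> snd z <> 0 -> X (fst z) < 0 ->
  forall t, X (fst (Phi t z)) < 0.
Proof.
  intros HX HP Hz Hx t. destruct (Rlt_le_dec (X (fst (Phi t z))) 0) as [|Hle]; auto. exfalso.
  assert (H0 : Phi 0 z = z) by (destruct HP as [H _]; apply H).
  destruct (IVT_gen (fun s => X (fst (Phi s z))) 0 t 0) as [s [_ Hs]].
  - intros u; apply Xt_cont; auto.
  - cbv beta. rewrite H0. rewrite Rmin_left by lra. rewrite Rmax_right by lra. lra.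
  - apply (traj_nz X Phi z HX HP Hz) with s; auto. lra.
Qed.

Lemma local_pos X Phi k m (Utp : R -> Prop) x0 :
  smooth1 X -> (forall y, exists z, y < z /\ X z = 0) -> (forall x, X x = 0 -> Derive X x <> 0) ->
  is_ham_flow X Phi -> open Utp -> (forall x, Kset X true x -> Utp x) ->
  smooth_on nonzero_xi k -> pos_homog1 k -> smooth_on nonzero_xi m -> pos_homog1 m ->
  (forall x xi, xi <> 0 -> Utp x -> m x xi = PB X k x xi) ->
  0 < X x0 ->
  exists a c y0, a < x0 < y0 /\ y0 < c /\ (forall u, a < u < c -> X u <> 0) /\
    forall x xi, a < x < y0 -> xi <> 0 ->
      is_lim (ell_approx k m Phi (x, xi)) p_infty (Rabs xi * Qf X k m (sg xi) y0 x).
Proof.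
  intros HX Hza HXnd HP HUo HUn Hks Hkh Hms Hmh HmU Hx0.
  assert (H0 : forall z, Phi 0 z = z) by (destruct HP as [H _]; apply H).
  assert (HXc : forall u, continuous X u) by (intros; apply X_cont; auto).
  destruct (dyn_incr X (fun t => fst (Phi t (x0, 1)))) as [c [Hc0 [HXc0 [Hlt [Hposu [Hreach Hmono]]]]]].
  - auto.
  - intros t. apply (flow_x X); auto.
  - intros t. apply (traj_pos X Phi (x0, 1)); simpl; auto; lra.
  - destruct (Hza x0) as [z1 [Hz1 Hz1']]. exists z1. rewrite H0. simpl. auto.
  - rewrite H0 in Hc0, Hposu, Hreach. simpl in Hc0, Hposu, Hreach.
    assert (HKc : Kset X true c).
    { split; auto. assert (Hd : Derive X c <= 0).
      { apply (dsign_left X c (Derive X c) x0); auto. apply smooth1_der; auto.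
        intros u Hu. apply Hposu. lra. }
      pose proof (HXnd c HXc0). lra. }
    destruct (open_ball Utp c HUo (HUn c HKc)) as [r [Hr HrU]].
    destruct (cont_eps X x0 (HXc x0) (X x0) Hx0) as [eps [Heps Hepsc]].
    set (a := x0 - eps).
    set (y0 := c - Rmin r (c - x0) / 2).
    assert (Hm : 0 < Rmin r (c - x0)) by (apply Rmin_pos; lra).
    pose proof (Rmin_l r (c - x0)) as Hmr. pose proof (Rmin_r r (c - x0)) as Hmc.
    assert (HXnz : forall u, a < u < c -> 0 < X u).
    { intros u Hu. destruct (Rle_dec x0 u).
      - apply Hposu; lra.
      - assert (Hq : Rabs (u - x0) < eps) by (rewrite Rabs_left; unfold a in Hu; lra).
        specialize (Hepsc u Hq). apply Rabs_def2 in Hepsc. lra. }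
    exists a, c, y0. split; [unfold a, y0; lra|]. split; [unfold y0; lra|]. split.
    { intros u Hu. specialize (HXnz u Hu). lra. }
    intros x xi Hx Hxi.
    assert (Hxc : 0 < X x) by (apply HXnz; unfold y0 in Hx; lra).
    destruct (dyn_incr X (fun t => fst (Phi t (x, xi)))) as [c' [Hc0' [HXc0' [Hlt' [Hposu' [Hreach' Hmono']]]]]].
    + auto.
    + intros t. apply (flow_x X); auto.
    + intros t. apply (traj_pos X Phi (x, xi)); simpl; auto.
    + exists c. rewrite H0. simpl. split; auto. unfold y0 in Hx; lra.
    + rewrite H0 in Hc0', Hposu', Hreach'. simpl in Hc0', Hposu', Hreach'.
      assert (Hcc : c' = c).
      { destruct (Rtotal_order c' c) as [Hl|[He|Hg]]; auto; exfalso.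
        - assert (Hq : a < c' < c) by (split; [unfold a, y0 in *; lra | lra]).
          specialize (HXnz c' Hq). lra.
        - assert (Hq : x <= c < c') by (unfold y0 in Hx; lra). specialize (Hposu' c Hq). lra. }
      subst c'.
      destruct (Hreach' y0) as [T [HT HyT]]. unfold y0 in *; lra.
      apply (lim_formula X Phi k m Utp x xi a c y0 T); auto.
      * intros u Hu. specialize (HXnz u Hu). lra.
      * unfold y0, a in *; lra.
      * intros t Ht. split. 
        -- pose proof (Hmono' 0 t Ht) as Hq. rewrite H0 in Hq. simpl in Hq.
           unfold a in *; lra.
        -- apply Hlt'.
      * intros t Ht. apply HrU. assert (y0 <= fst (Phi t (x, xi))) by (rewrite <- HyT; apply Hmono'; auto).
        specialize (Hlt' t). rewrite Rabs_left by lra. unfold y0 in *. lra.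
Qed.

Lemma local_neg X Phi k m (Utp : R -> Prop) x0 :
  smooth1 X -> (forall y, exists z, z < y /\ X z = 0) -> (forall x, X x = 0 -> Derive X x <> 0) ->
  is_ham_flow X Phi -> open Utp -> (forall x, Kset X true x -> Utp x) ->
  smooth_on nonzero_xi k -> pos_homog1 k -> smooth_on nonzero_xi m -> pos_homog1 m ->
  (forall x xi, xi <> 0 -> Utp x -> m x xi = PB X k x xi) ->
  X x0 < 0 ->
  exists cm b y0, cm < y0 /\ y0 < x0 < b /\ (forall u, cm < u < b -> X u <> 0) /\
    forall x xi, y0 < x < b -> xi <> 0 ->
      is_lim (ell_approx k m Phi (x, xi)) p_infty (Rabs xi * Qf X k m (sg xi) y0 x).
Proof.
  intros HX Hzb HXnd HP HUo HUn Hks Hkh Hms Hmh HmU Hx0.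
  assert (H0 : forall z, Phi 0 z = z) by (destruct HP as [H _]; apply H).
  assert (HXc : forall u, continuous X u) by (intros; apply X_cont; auto).
  set (F := fun u => - X (- u)).
  assert (HFc : forall u, continuous F u).
  { intros u. unfold F. apply (continuous_opp (fun u => X (- u))).
    apply (continuous_comp Ropp X). apply continuity_pt_filterlim. apply (continuity_pt_opp (fun u => u)). apply continuity_pt_id. auto. }
  assert (Hfd : forall z t, is_derive (fun t => - fst (Phi t z)) t (F (- fst (Phi t z)))).
  { intros z t. unfold F. rewrite Ropp_involutive. apply (is_derive_opp (fun t => fst (Phi t z))).
    apply (flow_x X); auto. }
  destruct (dyn_incr F (fun t => - fst (Phi t (x0, 1)))) as [c [Hc0 [HXc0 [Hlt [Hposu [Hreach Hmono]]]]]].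
  - auto.
  - intros t. apply Hfd.
  - intros t. unfold F. rewrite Ropp_involutive. pose proof (traj_neg X Phi (x0, 1) HX HP) as Hq.
    simpl in Hq. specialize (Hq ltac:(lra) Hx0 t). lra.
  - destruct (Hzb x0) as [z1 [Hz1 Hz1']]. exists (- z1). rewrite H0. simpl. unfold F.
    rewrite Ropp_involutive. split; lra.
  - rewrite H0 in Hc0, Hposu, Hreach. simpl in Hc0, Hposu, Hreach. unfold F in HXc0, Hposu.
    set (cm := - c).
    assert (HXcm : X cm = 0) by (unfold cm; lra).
    assert (Hneg : forall v, cm < v <= x0 -> X v < 0).
    { intros v Hv. specialize (Hposu (- v)). rewrite Ropp_involutive in Hposu. unfold cm in Hv.
      assert (0 < - X v) by (apply Hposu; lra). lra. }
    assert (HKc : Kset X true cm).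
    { split; auto. assert (Hd : Derive X cm <= 0).
      { apply (dsign_right X cm (Derive X cm) x0); auto. apply smooth1_der; auto. unfold cm; lra.
        intros u Hu. apply Hneg. lra. }
      pose proof (HXnd cm HXcm). lra. }
    destruct (open_ball Utp cm HUo (HUn cm HKc)) as [r [Hr HrU]].
    destruct (cont_eps X x0 (HXc x0) (- X x0)) as [eps [Heps Hepsc]]. lra.
    set (b := x0 + eps).
    set (y0 := cm + Rmin r (x0 - cm) / 2).
    assert (Hm : 0 < Rmin r (x0 - cm)) by (apply Rmin_pos; unfold cm; lra).
    pose proof (Rmin_l r (x0 - cm)) as Hmr. pose proof (Rmin_r r (x0 - cm)) as Hmc.
    assert (HXnz : forall u, cm < u < b -> X u < 0).
    { intros u Hu. destruct (Rle_dec u x0).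
      - apply Hneg; lra.
      - assert (Hq : Rabs (u - x0) < eps) by (rewrite Rabs_right; unfold b in Hu; lra).
        specialize (Hepsc u Hq). apply Rabs_def2 in Hepsc. lra. }
    exists cm, b, y0. split; [unfold y0; lra|]. split; [unfold y0, b; lra|]. split.
    { intros u Hu. specialize (HXnz u Hu). lra. }
    intros x xi Hx Hxi.
    assert (Hxc : X x < 0) by (apply HXnz; unfold y0 in Hx; lra).
    destruct (dyn_incr F (fun t => - fst (Phi t (x, xi)))) as [c' [Hc0' [HXc0' [Hlt' [Hposu' [Hreach' Hmono']]]]]].
    + auto.
    + intros t. apply Hfd.
    + intros t. unfold F. rewrite Ropp_involutive. pose proof (traj_neg X Phi (x, xi) HX HP) as Hq.
      simpl in Hq. specialize (Hq Hxi Hxc t). lra.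
    + exists c. rewrite H0. simpl. split; [|unfold F; lra]. unfold y0, cm in *; lra.
    + rewrite H0 in Hc0', Hposu', Hreach'. simpl in Hc0', Hposu', Hreach'. unfold F in HXc0', Hposu'.
      assert (Hcc : c' = c).
      { destruct (Rtotal_order c' c) as [Hl|[He|Hg]]; auto; exfalso.
        - assert (Hq : cm < - c' < b) by (unfold cm, b, y0 in *; lra).
          specialize (HXnz (- c') Hq). lra.
        - assert (Hq : - x <= c < c') by (unfold y0, cm in *; lra). specialize (Hposu' c Hq).
          unfold cm in HXcm. lra. }
      subst c'.
      destruct (Hreach' (- y0)) as [T [HT HyT]]. unfold y0, cm in *; lra.
      apply (lim_formula X Phi k m Utp x xi cm b y0 T); auto.
      * intros u Hu. specialize (HXnz u Hu). lra.
      * unfold y0, b in *; lra.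
      * intros t Ht. pose proof (Hmono' 0 t Ht) as Hq. rewrite H0 in Hq. simpl in Hq.
        specialize (Hlt' t). unfold cm, b in *. lra.
      * lra.
      * intros t Ht. apply HrU. pose proof (Hmono' T t Ht) as Hq. rewrite HyT in Hq.
        specialize (Hlt' t). rewrite Rabs_right by (unfold cm in *; lra). unfold y0, cm in *. lra.
Qed.

Definition open1 (A : R -> Prop) := forall x, A x -> exists r, 0 < r /\ forall u, Rabs (u - x) < r -> A u.

Lemma open2_prod A B : open1 A -> open1 B -> open2 (fun x xi => A x /\ B xi).
Proof.
  intros HA HB x xi [Hx Hxi]. destruct (HA x Hx) as [r1 [Hr1 H1]]. destruct (HB xi Hxi) as [r2 [Hr2 H2]].
  assert (Hr : 0 < Rmin r1 r2) by (apply Rmin_pos; auto).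
  exists (mkposreal _ Hr). simpl. intros u v Hu Hv. pose proof (Rmin_l r1 r2); pose proof (Rmin_r r1 r2).
  split; [apply H1 | apply H2]; lra.
Qed.

Lemma open1_U (U : R -> Prop) : open U -> open1 U.
Proof. intros HU x Hx. apply open_ball; auto. Qed.

Lemma open1_int a b : open1 (fun x => a < x < b).
Proof.
  intros x Hx. exists (Rmin (x - a) (b - x)). split. apply Rmin_pos; lra.
  intros u Hu. pose proof (Rmin_l (x - a) (b - x)); pose proof (Rmin_r (x - a) (b - x)).
  apply Rabs_def2 in Hu. lra.
Qed.

Lemma open1_sign p : open1 (fun e => e * p > 0).
Proof.
  intros x Hx. exists (Rabs x). assert (Hx0 : x <> 0) by (intros ->; lra). split. apply Rabs_pos_lt; auto.
  intros u Hu. apply Rabs_def2 in Hu. destruct (Rle_dec 0 x).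
  - rewrite Rabs_right in Hu by lra. assert (0 < x) by lra. assert (p > 0) by nra. nra.
  - rewrite Rabs_left in Hu by lra. assert (p < 0) by nra. nra.
Qed.

Definition ellP (k m : R -> R -> R) Phi x xi := real (Lim (ell_approx k m Phi (x, xi)) p_infty).

Lemma ellP_eq k m Phi x xi (l : R) : is_lim (ell_approx k m Phi (x, xi)) p_infty l -> ellP k m Phi x xi = l.
Proof. intros H. unfold ellP. rewrite (is_lim_unique _ _ _ H). reflexivity. Qed.

Lemma Q_Sm X k m n a b y0 s : smooth1 X -> smooth_on nonzero_xi m -> s <> 0 ->
  (forall u, a < u < b -> X u <> 0) -> a < y0 < b -> Sm n a b (Qf X k m s y0).
Proof.
  intros HX Hms Hs HXnz Hy. unfold Qf.
  apply Sm_mult. apply Sm_of_smooth1; auto.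
  apply Sm_plus. apply Sm_const. apply Sm_opp. apply Sm_S. apply Sm_RInt; auto. apply g_Sm; auto.
Qed.

Lemma Q_der X k m a b y0 s x : smooth1 X -> smooth_on nonzero_xi m -> s <> 0 ->
  (forall u, a < u < b -> X u <> 0) -> a < y0 < b -> a < x < b ->
  is_derive (Qf X k m s y0) x
    (Derive X x * (k y0 s / X y0 - RInt (fun u => m u s / (X u * X u)) x y0) + X x * (m x s / (X x * X x))).
Proof.
  intros HX Hms Hs HXnz Hy Hx. unfold Qf.
  eapply dval. apply dmult. apply smooth1_der; auto. apply dminus. apply dconst.
  apply (RInt_lower_der _ a b); auto. intros u Hu. apply (Sm_cont 0 a b). apply g_Sm; auto. auto.
  simpl. ring.
Qed.

Lemma main_true X Phi (Utp : R -> Prop) delta k m :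
  smooth1 X -> (forall y, exists z, y < z /\ X z = 0) -> (forall y, exists z, z < y /\ X z = 0) ->
  (forall x, X x = 0 -> Derive X x <> 0) -> is_ham_flow X Phi -> open Utp ->
  (forall x, Kset X true x -> Utp x) ->
  (forall t x xi, 0 <= t -> Utp x -> Utp (fst (Phi t (x, xi)))) ->
  smooth_on nonzero_xi k -> pos_homog1 k -> smooth_on nonzero_xi m -> pos_homog1 m ->
  (forall x xi, xi <> 0 -> Utp x -> m x xi = PB X k x xi) ->
  (forall x xi, xi <> 0 -> m x xi >= delta / 2 * Rabs xi) ->
  exists ell : R -> R -> R,
    (forall x xi, Bset X true x xi -> is_lim (ell_approx k m Phi (x, xi)) (limpt true) (ell x xi)) /\
    smooth_on (Bset X true) ell /\
    (forall x xi lam, 0 < lam -> Bset X true x xi -> ell x (lam * xi) = lam * ell x xi) /\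
    (forall x xi, xi <> 0 -> Kset X true x -> ell x xi = k x xi) /\
    (forall x xi, Bset X true x xi -> PB X ell x xi >= delta / 2 * Rabs xi).
Proof.
  intros HX Hza Hzb HXnd HP HUo HUn HUinv Hks Hkh Hms Hmh HmU Hmpos.
  set (ell := ellP k m Phi).
  assert (Hval : forall x xi, xi <> 0 -> Utp x -> ell x xi = k x xi).
  { intros x xi Hxi Hx. unfold ell. apply ellP_eq. apply (lim_Utp X Phi k m Utp); auto. }
  assert (Hrep : forall x0, X x0 <> 0 -> exists a1 b1 a2 b2 y0,
      a2 <= a1 /\ a1 < x0 < b1 /\ b1 <= b2 /\ a2 < y0 < b2 /\ (forall u, a2 < u < b2 -> X u <> 0) /\
      (forall x xi, a1 < x < b1 -> xi <> 0 ->
         is_lim (ell_approx k m Phi (x, xi)) p_infty (Rabs xi * Qf X k m (sg xi) y0 x))).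
  { intros x0 Hx0. destruct (Rlt_le_dec 0 (X x0)) as [Hp|Hn].
    - destruct (local_pos X Phi k m Utp x0) as [a [c [y0 [H1 [H2 [H3 H4]]]]]]; auto.
      exists a, y0, a, c, y0. repeat split; try lra; auto.
    - destruct (local_neg X Phi k m Utp x0) as [cm [b [y0 [H1 [H2 [H3 H4]]]]]]; auto. lra.
      exists y0, b, cm, b, y0. repeat split; try lra; auto. }
  assert (Hrep' : forall x0, X x0 <> 0 -> exists a1 b1 a2 b2 y0,
      a2 <= a1 /\ a1 < x0 < b1 /\ b1 <= b2 /\ a2 < y0 < b2 /\ (forall u, a2 < u < b2 -> X u <> 0) /\
      (forall x xi, a1 < x < b1 -> xi <> 0 -> ell x xi = Rabs xi * Qf X k m (sg xi) y0 x)).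
  { intros x0 Hx0. destruct (Hrep x0 Hx0) as [a1 [b1 [a2 [b2 [y0 [H1 [H2 [H3 [H4 [H5 H6]]]]]]]]]].
    exists a1, b1, a2, b2, y0. refine (conj H1 (conj H2 (conj H3 (conj H4 (conj H5 _))))). intros x xi Hx Hxi. unfold ell. apply ellP_eq. auto. }
  assert (Hcase : forall x xi, Bset X true x xi -> Utp x \/ X x <> 0).
  { intros x xi [Hxi HK]. simpl in HK. destruct (Req_dec (X x) 0) as [H0|H0]; [left|right; auto].
    apply HUn. split; auto. pose proof (HXnd x H0). destruct (Rtotal_order (Derive X x) 0) as [|[|]]; auto.
    contradiction. exfalso. apply HK. split; auto. }
  exists ell. split; [|split; [|split; [|split]]].
  -
    intros x xi HB. simpl. destruct (Hcase x xi HB) as [HU|Hnz].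
    + rewrite Hval; [|apply HB|auto]. apply (lim_Utp X Phi k m Utp); auto. apply HB.
    + destruct (Hrep x Hnz) as [a1 [b1 [a2 [b2 [y0 [H1 [H2 [H3 [H4 [H5 H6]]]]]]]]]].
      pose proof (H6 x xi H2 (proj1 HB)) as Hl. unfold ell. rewrite (ellP_eq _ _ _ _ _ _ Hl). auto.
  -
    intros n. apply Cn_local. intros x0 xi0 HB. destruct (Hcase x0 xi0 HB) as [HU|Hnz].
    + exists (fun x xi => Utp x /\ xi * xi0 > 0). split.
      { split; auto. destruct HB as [Hxi _]. assert (0 < xi0 * xi0) by (apply Rsqr_pos_lt in Hxi; unfold Rsqr in Hxi; auto). lra. }
      apply Cn_ext with k.
      * apply open2_prod. apply open1_U; auto. apply open1_sign.
      * intros x xi [Hx Hxi]. symmetry. apply Hval; auto. intros ->; lra.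
      * apply Cn_sub with nonzero_xi; auto. intros x xi [_ Hxi]. unfold nonzero_xi. intros ->; lra.
    + destruct (Hrep' x0 Hnz) as [a1 [b1 [a2 [b2 [y0 [H1 [H2 [H3 [H4 [H5 H6]]]]]]]]]].
      exists (fun x xi => a1 < x < b1 /\ xi * xi0 > 0). split.
      { split; auto. destruct HB as [Hxi _]. assert (0 < xi0 * xi0) by (apply Rsqr_pos_lt in Hxi; unfold Rsqr in Hxi; auto). lra. }
      apply Cn_ext with (fun x xi => (1 * xi + 0) * (sg xi0 * Qf X k m (sg xi0) y0 x)).
      * apply open2_prod. apply open1_int. apply open1_sign.
      * intros x xi [Hx Hxi]. rewrite H6; auto. rewrite sg_abs. rewrite (sg_same xi xi0); auto. ring.
        intros ->; lra.
      * apply (Cn_prod n a1 b1 (fun xi => xi * xi0 > 0)). intros j.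
        apply Sm_mult. apply Sm_const. apply Sm_sub with a2 b2; auto.
        apply Q_Sm; auto. apply sg_nz.
  -
    intros x xi lam Hlam HB. destruct HB as [Hxi HK].
    assert (Hlxi : lam * xi <> 0) by (apply Rmult_integral_contrapositive; split; lra).
    destruct (Hcase x xi (conj Hxi HK)) as [HU|Hnz].
    + rewrite !Hval; auto.
    + destruct (Hrep' x Hnz) as [a1 [b1 [a2 [b2 [y0 [H1 [H2 [H3 [H4 [H5 H6]]]]]]]]]].
      rewrite !H6; auto. rewrite (sg_same (lam * xi) xi).
      rewrite Rabs_mult. rewrite (Rabs_right lam) by lra. ring.
      assert (0 < xi * xi) by (apply Rsqr_pos_lt in Hxi; unfold Rsqr in Hxi; auto). nra.
  -
    intros x xi Hxi HK. apply Hval; auto.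
  -
    intros x0 xi0 HB. destruct (Hcase x0 xi0 HB) as [HU|Hnz]; destruct HB as [Hxi0 _].
    + assert (Hdx : dx ell x0 xi0 = dx k x0 xi0).
      { unfold dx. apply Derive_ext_loc. generalize (HUo x0 HU). apply filter_imp. intros y Hy. apply Hval; auto. }
      assert (Hdxi : dxi ell x0 xi0 = dxi k x0 xi0).
      { unfold dxi. apply Derive_ext_loc. generalize (loc_sign xi0 Hxi0). apply filter_imp. intros e He.
        apply Hval; auto. intros ->; lra. }
      unfold PB. rewrite Hdx, Hdxi. fold (PB X k x0 xi0). rewrite <- HmU; auto.
    + destruct (Hrep' x0 Hnz) as [a1 [b1 [a2 [b2 [y0 [H1 [H2 [H3 [H4 [H5 H6]]]]]]]]]].
      set (s := sg xi0).
      assert (Hd := Q_der X k m a2 b2 y0 s x0 HX Hms (sg_nz xi0) H5 H4 ltac:(lra)).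
      assert (Hdx : dx ell x0 xi0 = Rabs xi0 * Derive (Qf X k m s y0) x0).
      { unfold dx. rewrite <- Derive_scal. apply Derive_ext_loc.
        generalize (loc_int a1 b1 x0 H2). apply filter_imp. intros y Hy. apply H6; auto. }
      assert (Hdxi : dxi ell x0 xi0 = s * Qf X k m s y0 x0).
      { unfold dxi. apply is_derive_unique.
        apply is_derive_ext_loc with (fun e => s * e * Qf X k m s y0 x0).
        - generalize (loc_sign xi0 Hxi0). apply filter_imp. intros e He. symmetry.
          rewrite H6; auto. rewrite sg_abs. rewrite (sg_same e xi0 He). auto. intros ->; lra.
        - eapply dval. apply dmult. apply (is_derive_scal (fun e => e)). apply (is_derive_id).
          apply dconst. simpl. unfold one; simpl. ring. }
      unfold PB. rewrite Hdx, Hdxi. rewrite (is_derive_unique _ _ _ Hd).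
      assert (HXx : X x0 <> 0) by (apply H5; lra).
      replace (X x0 * (Rabs xi0 * (Derive X x0 * (k y0 s / X y0 - RInt (fun u => m u s / (X u * X u)) x0 y0) +
          X x0 * (m x0 s / (X x0 * X x0)))) - xi0 * Derive X x0 * (s * Qf X k m s y0 x0))
        with (m x0 xi0).
      apply Hmpos; auto.
      rewrite (homog_sg m x0 xi0 Hmh Hxi0). fold s. unfold Qf. rewrite sg_abs. fold s. field. auto.
Qed.

Lemma d_opp_id t : is_derive (fun s : R => - s) t (-1).
Proof. apply is_derive_Reals. replace (-1) with (-(1)) by ring. apply derivable_pt_lim_opp. apply derivable_pt_lim_id. Qed.

Lemma smooth1_opp X : smooth1 X -> smooth1 (fun x => - X x).
Proof. intros H n x. apply ex_derive_n_opp. apply H. Qed.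

Lemma Derive_opp' (X : R -> R) x : Derive (fun x => - X x) x = - Derive X x.
Proof. apply Derive_opp. Qed.

Lemma Kset_opp X b x : Kset (fun x => - X x) b x <-> Kset X (negb b) x.
Proof.
  unfold Kset. rewrite Derive_opp'. destruct b; simpl; split; intros [H1 H2]; split; lra.
Qed.

Lemma ham_flow_rev X Phi : is_ham_flow X Phi -> is_ham_flow (fun x => - X x) (fun t z => Phi (- t) z).
Proof.
  intros [H0 Hd]. split.
  - intros z. rewrite Ropp_0. auto.
  - intros z t. destruct (Hd z (- t)) as [Hx Hp]. split.
    + eapply dval. apply (dcomp (fun s => fst (Phi s z)) Ropp). apply Hx. apply d_opp_id. cbv beta. change (-1 * X (fst (Phi (- t) z)) = - X (fst (Phi (- t) z))). ring.
    + eapply dval. apply (dcomp (fun s => snd (Phi s z)) Ropp). apply Hp. apply d_opp_id.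
      rewrite Derive_opp'. change (-1 * (- snd (Phi (- t) z) * Derive X (fst (Phi (- t) z))) = - snd (Phi (- t) z) * - Derive X (fst (Phi (- t) z))). ring.
Qed.

Lemma PB_opp X f x xi : PB (fun x => - X x) (fun x xi => - f x xi) x xi = PB X f x xi.
Proof.
  unfold PB, dx, dxi. cbv beta. repeat rewrite Derive_opp'.
  change (Derive (f x) xi) with (Derive (fun e => f x e) xi). ring.
Qed.

Lemma PB_opp2 X f x xi : PB X (fun x xi => - f x xi) x xi = PB (fun x => - X x) f x xi.
Proof.
  unfold PB, dx, dxi. cbv beta. repeat rewrite Derive_opp'.
  change (Derive (f x) xi) with (Derive (fun e => f x e) xi). ring.
Qed.

Lemma homog_opp f : pos_homog1 f -> pos_homog1 (fun x xi => - f x xi).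
Proof. intros H x xi lam Hl Hxi. rewrite H; auto. ring. Qed.

Lemma approx_rev X Phi k m z t : smooth1 X -> is_ham_flow X Phi ->
  smooth_on nonzero_xi m -> pos_homog1 m -> snd z <> 0 ->
  ell_approx (fun x xi => - k x xi) m (fun t z => Phi (- t) z) z t = - ell_approx k m Phi z (- t).
Proof.
  intros HX HP Hms Hmh Hz. unfold ell_approx.
  set (f := fun s => m (fst (Phi s z)) (snd (Phi s z))).
  assert (Hf : forall s, continuous f s) by (intros; apply (F_cont X); auto).
  assert (Hg : forall s, continuous (fun s => f (- s)) s).
  { intros s. apply (continuous_comp Ropp f). apply der_cont' with (-1). apply d_opp_id. auto. }
  assert (H1 : RInt (fun s => f (- s)) 0 t = - RInt f 0 (- t)).
  { assert (Hd : forall u, is_derive (fun t => RInt (fun s => f (- s)) 0 t + RInt f 0 (- t)) u 0).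
    { intros u. eapply dval. apply dplus. apply cont_RInt_der; auto.
      apply (dcomp (fun v => RInt f 0 v) Ropp). apply cont_RInt_der; auto. apply d_opp_id.
      change (f (- u) + -1 * f (- u) = 0). ring. }
    pose proof (const_all _ Hd t) as Hc. cbv beta in Hc. rewrite Ropp_0, !RInt_point in Hc.
    unfold zero in Hc; simpl in Hc. lra. }
  change (RInt (fun s => m (fst (Phi (- s) z)) (snd (Phi (- s) z))) 0 t) with (RInt (fun s => f (- s)) 0 t).
  change (RInt (fun s => m (fst (Phi s z)) (snd (Phi s z))) 0 (- t)) with (RInt f 0 (- t)).
  rewrite H1. ring.
Qed.

Theorem mainTheorem14
  (X : R -> R) (Phi : R -> R * R -> R * R)
  (Utp Utm : R -> Prop) (delta : R) (k m : R -> R -> R)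
  (HXs : smooth1 X) (HXp : periodic1 X)
  (HXz : exists x, X x = 0)
  (HXnd : forall x, X x = 0 -> Derive X x <> 0)
  (HPhi : is_ham_flow X Phi)
  (HUp_open : open Utp) (HUm_open : open Utm)
  (HUp_per : forall x, Utp (x + 2 * PI) <-> Utp x)
  (HUm_per : forall x, Utm (x + 2 * PI) <-> Utm x)
  (HUp_nbhd : forall x, Kset X true x -> Utp x)
  (HUm_nbhd : forall x, Kset X false x -> Utm x)
  (HUp_inv : forall t x xi, 0 <= t -> Utp x -> Utp (fst (Phi t (x, xi))))
  (HUm_inv : forall t x xi, t <= 0 -> Utm x -> Utm (fst (Phi t (x, xi))))
  (Hdelta : 0 < delta)
  (Hks : smooth_on nonzero_xi k) (Hkp : periodic2 k) (Hkh : pos_homog1 k)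
  (Hms : smooth_on nonzero_xi m) (Hmp : periodic2 m) (Hmh : pos_homog1 m)
  (HkG : forall (b : bool) x xi, xi <> 0 -> Kset X b x -> k x xi = sgn b * Rabs xi)
  (HkU : forall x xi, xi <> 0 -> (Utp x \/ Utm x) -> PB X k x xi >= delta * Rabs xi)
  (HmU : forall x xi, xi <> 0 -> (Utp x \/ Utm x) -> m x xi = PB X k x xi)
  (Hmpos : forall x xi, xi <> 0 -> m x xi >= delta / 2 * Rabs xi) :
  forall b : bool,
    exists ell : R -> R -> R,
      (forall x xi, Bset X b x xi ->
         is_lim (ell_approx k m Phi (x, xi)) (limpt b) (ell x xi)) /\
      smooth_on (Bset X b) ell /\
      (forall x xi lam, 0 < lam -> Bset X b x xi -> ell x (lam * xi) = lam * ell x xi) /\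
      (forall x xi, xi <> 0 -> Kset X b x -> ell x xi = k x xi) /\
      (forall x xi, Bset X b x xi -> PB X ell x xi >= delta / 2 * Rabs xi).
Proof.
  pose proof (zeros_above X HXp HXz) as Hza.
  pose proof (zeros_below X HXp HXz) as Hzb.
  intros b. destruct b.
  - apply (main_true X Phi Utp delta k m); auto.
  - destruct (main_true (fun x => - X x) (fun t z => Phi (- t) z) Utm delta (fun x xi => - k x xi) m)
      as [ell' [H1 [H2 [H3 [H4 H5]]]]].
    + apply smooth1_opp; auto.
    + intros y. destruct (Hza y) as [z [Hz1 Hz2]]. exists z. split; auto. lra.
    + intros y. destruct (Hzb y) as [z [Hz1 Hz2]]. exists z. split; auto. lra.
    + intros x Hx. rewrite Derive_opp'. intros Hd. apply (HXnd x). lra. lra.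
    + apply ham_flow_rev; auto.
    + auto.
    + intros x Hx. apply HUm_nbhd. exact (proj1 (Kset_opp X true x) Hx).
    + intros t x xi Ht Hx. apply HUm_inv; auto. lra.
    + intros n. apply Cn_opp. apply Hks.
    + apply homog_opp; auto.
    + auto.
    + auto.
    + intros x xi Hxi Hx. rewrite PB_opp. apply HmU; auto.
    + auto.
    + assert (HB : forall x xi, Bset X false x xi -> Bset (fun x => - X x) true x xi).
      { intros x xi [Hxi HK]. split; auto. intros HK'. apply HK. exact (proj1 (Kset_opp X false x) HK'). }
      exists (fun x xi => - ell' x xi). split; [|split; [|split; [|split]]].
      * intros x xi HBx. simpl. specialize (H1 x xi (HB x xi HBx)). simpl in H1.
        assert (Hl : is_lim (fun s => - ell_approx (fun x xi => - k x xi) m (fun t z => Phi (- t) z) (x, xi) (- s))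
                   m_infty (Rbar_opp (ell' x xi))).
        { apply is_lim_opp.
          apply (is_lim_comp (ell_approx (fun x xi => - k x xi) m (fun t z => Phi (- t) z) (x, xi)) Ropp m_infty (ell' x xi) p_infty); auto.
          - pose proof (is_lim_opp (fun y => y) m_infty m_infty (is_lim_id m_infty)) as Hq. exact Hq.
          - exists 0. intros y _. discriminate. }
        eapply is_lim_ext; [|exact Hl].
        intros s. cbv beta. rewrite (approx_rev X Phi k m (x, xi) (- s)); auto. rewrite !Ropp_involutive. reflexivity.
        destruct HBx; auto.
      * intros n. apply Cn_sub with (Bset (fun x => - X x) true); auto. apply Cn_opp. apply H2.
      * intros x xi lam Hl HBx. rewrite H3; auto. ring.
      * intros x xi Hxi HK. rewrite H4; auto. ring. exact (proj2 (Kset_opp X true x) HK).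
      * intros x xi HBx. rewrite PB_opp2. apply H5; auto.
Qed.
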